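(* Let $S_f$ and $S_g$ be two equivalent inequality sets in $\mathbf{x}=(x_1,\ldots,x_n)$ (i.e., with the same solution set in $\mathbb{R}^n$), and fix the variable order $x_1\prec\cdots\prec x_n$. Then their reduced minimal characterization sets are the same: the equality parts coincide and the inequality parts are trivially equivalent.
   Context: An inequality set is a finite set $S=\{f_i\ge 0: i=1,\ldots,m\}$ with each $f_i$ a nonzero homogeneous linear polynomial in $\mathbf{x}$ with real coefficients; its solutions are the points of $\mathbb{R}^n$ satisfying all inequalities; a subset of $S$ is an inequality set whose polynomials form a subset of $\{f_1,\ldots,f_m\}$. The equality $f_k=0$ is an implied equality of $S$ if $f_k(\mathbf{x})=0$ for every solution of $S$. Inequalities $f_1\ge0,\ldots,f_k\ge0$ imply $f\ge0$ if every $\mathbf{x}$ satisfying the former satisfies $f(\mathbf{x})\ge0$; an inequality of a set is redundant if implied by the other inequalities of the set. Two inequality sets are equivalent if they have the same solution set. A subset $S'$ of $S$ is a minimal characterization set of $S$ if $S'$ is equivalent to $S$ and contains no redundant inequality. Two inequalities $f\ge0$, $g\ge 0$ are trivially equivalent if $f=c\,g$ for some real $c>0$; two inequality sets are trivially equivalent if they have the same number of inequalities and each inequality of either set is trivially equivalent to some inequality of the other. For a finite system $E$ of homogeneous linear equations of rank $\tilde n$, its Gauss–Jordan reduced form (reduced row echelon form) w.r.t. $x_1\prec\cdots\prec x_n$ is the unique equivalent system $\{x_{k_i}-U_i=0: i=1,\ldots,\tilde n\}$, $k_1<\cdots<k_{\tilde n}$, each $U_i$ a real linear combination of non-pivot variables.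 For an inequality set $S_f=\{f_i\ge0\}$: let $I$ be the set of indices $k$ with $f_k=0$ an implied equality of $S_f$, $E=\{f_k=0:k\in I\}$, and $\widetilde E=\{x_{k_i}-U_i=0\}$ its Gauss–Jordan reduced form; let $R_f$ be the set of nonzero polynomials obtained from $f_j$, $j\notin I$, by substituting $U_i$ for $x_{k_i}$ for all $i$. The reduced minimal characterization set of $S_f$ is $\widetilde{E}\cup S_{r'}$, where $S_{r'}$ is a minimal characterization set of $\{g\ge 0: g\in R_f\}$ (unique up to trivial equivalence). *)

(* Defs.v *)
(* Homogeneous linear polynomials in x_1..x_n are represented
   by their coefficient row vectors 'rV[R]_n; points of R^n are also 'rV[R]_n. *)
From HB Require Import structures.
From mathcomp Require Import all_boot all_order all_algebra.
Set Implicit Arguments. Unset Strict Implicit. Unset Printing Implicit Defensive.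
Import Order.TTheory GRing.Theory Num.Theory.
Local Open Scope ring_scope.

Section Defs.
Variables (R : realFieldType) (n : nat).
Notation vec := 'rV[R]_n.

Definition linE (f x : vec) : R := \sum_(i < n) f 0 i * x 0 i.

Definition solP (P : vec -> Prop) (x : vec) : Prop :=
  forall g, P g -> 0 <= linE g x.

Definition memS (S : seq vec) : vec -> Prop := fun f => f \in S.

Definition equiv_ineq (P Q : vec -> Prop) : Prop :=
  forall x, solP P x <-> solP Q x.

Definition implied_eq (S : seq vec) (f : vec) : Prop :=
  forall x, solP (memS S) x -> linE f x = 0.

Definition impliesP (P : vec -> Prop) (f : vec) : Prop :=
  forall x, solP P x -> 0 <= linE f x.

Definition redundant (S' : seq vec) (f : vec) : Prop :=
  impliesP (memS [seq g <- S' | g != f]) f.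

Definition min_char_set (P : vec -> Prop) (S' : seq vec) : Prop :=
  [/\ uniq S', (forall f, f \in S' -> P f), equiv_ineq (memS S') P &
      (forall f, f \in S' -> ~ redundant S' f)].

Definition triv_eq (f g : vec) : Prop := exists c : R, 0 < c /\ f = c *: g.

Definition triv_eq_sets (S T : seq vec) : Prop :=
  [/\ size (undup S) = size (undup T),
      (forall f, f \in S -> exists2 g, g \in T & triv_eq f g) &
      (forall g, g \in T -> exists2 f, f \in S & triv_eq g f)].

Definition coef (f : vec) (p : nat) : R := \sum_(l < n | val l == p) f 0 l.

(* E (rows x_{k_i} - U_i, pivots ps = [k_1;...;k_t], 0-based) is the
   Gauss-Jordan reduced form of the system of implied equalities of S *)
Definition is_GJ (S : seq vec) (E : seq vec) (ps : seq nat) : Prop :=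
  [/\ size ps = size E, sorted ltn ps & all (fun p => p < n)%N ps] /\
  [/\ (forall (i : nat) (l : 'I_n), (i < size E)%N ->
          (val l < nth 0%N ps i)%N -> (nth 0 E i) 0 l = 0),
      (forall (i j : nat) (l : 'I_n), (i < size E)%N -> (j < size E)%N ->
          val l = nth 0%N ps j -> (nth 0 E i) 0 l = (i == j)%:R) &
      (forall x, (forall e, e \in E -> linE e x = 0) <->
                 (forall f, f \in S -> implied_eq S f -> linE f x = 0))].

(* substitute U_i for x_{k_i} (i.e. x_{k_i} - e_i) in f *)
Definition reduce (E : seq vec) (ps : seq nat) (f : vec) : vec :=
  f - \sum_(i < size E) coef f (nth 0%N ps i) *: nth 0 E i.

Definition in_Rset (S : seq vec) (E : seq vec) (ps : seq nat) (g : vec) : Prop :=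
  g != 0 /\ exists2 f, f \in S & ~ implied_eq S f /\ g = reduce E ps f.

End Defs.

(* Main.v *)
Require Import Defs.
From mathcomp Require Import all_boot all_order all_algebra.
From mathcomp Require Import ring lra.
From Stdlib Require Import Classical.
Set Implicit Arguments. Unset Strict Implicit. Unset Printing Implicit Defensive.
Import Order.TTheory GRing.Theory Num.Theory.
Local Open Scope ring_scope.

Section Lin.
Variables (R : realFieldType) (n : nat).
Notation vec := 'rV[R]_n.
Implicit Types (f g x y : vec).

Lemma linE_sym f x : linE f x = linE x f.
Proof. by rewrite /linE; apply: eq_bigr => i _; rewrite mulrC. Qed.

Lemma linEDl f g x : linE (f + g) x = linE f x + linE g x.
Proof. by rewrite /linE -big_split; apply: eq_bigr => i _; rewrite mxE mulrDl. Qed.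

Lemma linENl f x : linE (- f) x = - linE f x.
Proof. by rewrite /linE -sumrN; apply: eq_bigr => i _; rewrite mxE mulNr. Qed.

Lemma linEBl f g x : linE (f - g) x = linE f x - linE g x.
Proof. by rewrite linEDl linENl. Qed.

Lemma linEZl c f x : linE (c *: f) x = c * linE f x.
Proof. by rewrite /linE mulr_sumr; apply: eq_bigr => i _; rewrite mxE mulrA. Qed.

Lemma linE0l x : linE 0 x = 0.
Proof. by rewrite /linE big1 // => i _; rewrite mxE mul0r. Qed.

Lemma linE_suml m (F : 'I_m -> vec) x :
  linE (\sum_(i < m) F i) x = \sum_(i < m) linE (F i) x.
Proof.
rewrite /linE.
under eq_bigr do rewrite summxE mulr_suml.
by rewrite exchange_big.
Qed.

Lemma linEDr f x y : linE f (x + y) = linE f x + linE f y.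
Proof. by rewrite !(linE_sym f) linEDl. Qed.
Lemma linEBr f x y : linE f (x - y) = linE f x - linE f y.
Proof. by rewrite !(linE_sym f) linEBl. Qed.
Lemma linEZr c f x : linE f (c *: x) = c * linE f x.
Proof. by rewrite !(linE_sym f) linEZl. Qed.
Lemma linE0r f : linE f 0 = 0.
Proof. by rewrite linE_sym linE0l. Qed.
Lemma linENr f x : linE f (- x) = - linE f x.
Proof. by rewrite !(linE_sym f) linENl. Qed.
Lemma linE_sumr m (F : 'I_m -> vec) f :
  linE f (\sum_(i < m) F i) = \sum_(i < m) linE f (F i).
Proof. by rewrite linE_sym linE_suml; apply: eq_bigr => i _; rewrite linE_sym. Qed.

Definition uvecn (k : nat) : vec := \row_j ((val j == k)%:R).

Lemma coefE f p (Hp : (p < n)%N) : coef f p = f 0 (Ordinal Hp).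
Proof.
by rewrite /coef (big_pred1 (Ordinal Hp)).
Qed.

Lemma coef_out f p : (n <= p)%N -> coef f p = 0.
Proof.
move=> Hp; rewrite /coef big_pred0 // => l; apply/negbTE/eqP => El.
by have := ltn_ord l; rewrite El ltnNge Hp.
Qed.

Lemma linE_uvecn f k : linE f (uvecn k) = coef f k.
Proof.
rewrite /linE /coef [RHS]big_mkcond /=.
apply: eq_bigr => i _; rewrite mxE.
by case: (val i == k); rewrite ?mulr1 ?mulr0.
Qed.

Lemma coefD f g k : coef (f + g) k = coef f k + coef g k.
Proof. by rewrite -!linE_uvecn linEDl. Qed.
Lemma coefB f g k : coef (f - g) k = coef f k - coef g k.
Proof. by rewrite -!linE_uvecn linEBl. Qed.
Lemma coefZ c f k : coef (c *: f) k = c * coef f k.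
Proof. by rewrite -!linE_uvecn linEZl. Qed.
Lemma coef_sum m (F : 'I_m -> vec) k : coef (\sum_(i < m) F i) k = \sum_(i < m) coef (F i) k.
Proof. by rewrite -!linE_uvecn linE_suml; apply: eq_bigr => i _; rewrite linE_uvecn. Qed.

Lemma coef_uvecn a b : coef (uvecn a) b = ((a == b) && (b < n)%N)%:R.
Proof.
case: (ltnP b n) => Hb; last by rewrite coef_out // andbF.
by rewrite coefE mxE /= andbT eq_sym.
Qed.

Lemma vec_coefP f g : (forall k, (k < n)%N -> coef f k = coef g k) -> f = g.
Proof.
move=> H; apply/rowP => l.
have := H _ (ltn_ord l); rewrite !coefE.
by have -> : Ordinal (ltn_ord l) = l by apply: val_inj.
Qed.

Lemma linE_self_gt0 f : f != 0 -> 0 < linE f f.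
Proof.
move=> Hf; rewrite /linE lt_def; apply/andP; split; last first.
  by apply: sumr_ge0 => i _; rewrite -expr2 sqr_ge0.
rewrite psumr_eq0; last by move=> i _; rewrite -expr2 sqr_ge0.
apply: contra Hf => /allP H; apply/eqP/rowP => l; rewrite mxE.
have := H l (mem_index_enum l); rewrite /= mulf_eq0 orbb.
by move/eqP.
Qed.

End Lin.
Arguments uvecn {R n} k.
Arguments coef_uvecn {R n} a b.
Section GJ.
Variables (R : realFieldType) (n : nat).
Notation vec := 'rV[R]_n.
Variables (E : seq vec) (ps : seq nat).
Hypotheses (Hs : size ps = size E) (Hsort : sorted ltn ps)
  (Hall : all (fun p => p < n)%N ps)
  (H0 : forall (i : nat) (l : 'I_n), (i < size E)%N ->
          (val l < nth 0%N ps i)%N -> (nth 0 E i) 0 l = 0)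
  (H1 : forall (i j : nat) (l : 'I_n), (i < size E)%N -> (j < size E)%N ->
          val l = nth 0%N ps j -> (nth 0 E i) 0 l = (i == j)%:R).

Definition kerE (x : vec) := forall e, e \in E -> linE e x = 0.

Lemma ps_lt j : (j < size E)%N -> (nth 0%N ps j < n)%N.
Proof. by move=> Hj; apply: (allP Hall); rewrite mem_nth // Hs. Qed.

Lemma G1 i j : (i < size E)%N -> (j < size E)%N ->
  coef (nth 0 E i) (nth 0%N ps j) = (i == j)%:R.
Proof. by move=> Hi Hj; rewrite (coefE _ (ps_lt Hj)); apply: H1. Qed.

Lemma sum_delta m (F : nat -> R) j : (j < m)%N ->
  \sum_(i < m) F i * ((i : nat) == j)%:R = F j.
Proof.
move=> Hj; rewrite (bigD1 (Ordinal Hj)) //= eqxx mulr1 big1 ?addr0 // => i Hi.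
suff -> : (val i == j) = false by rewrite mulr0.
by apply/negbTE; apply: contra Hi => /eqP Ei; apply/eqP/val_inj.
Qed.

Lemma coef_reduce_piv f j : (j < size E)%N ->
  coef (reduce E ps f) (nth 0%N ps j) = 0.
Proof.
move=> Hj; rewrite /reduce coefB coef_sum.
under eq_bigr => i _ do rewrite coefZ G1 //.
by rewrite (sum_delta (fun i => coef f (nth 0%N ps i))) // subrr.
Qed.

Lemma linE_reduce_ker f x : kerE x -> linE (reduce E ps f) x = linE f x.
Proof.
move=> Hx; rewrite /reduce linEBl linE_suml big1 ?subr0 // => i _.
by rewrite linEZl Hx ?mulr0 // mem_nth.
Qed.

Definition zvec (p : nat) : vec :=
  uvecn p - \sum_(j < size E) coef (nth 0 E j) p *: uvecn (nth 0%N ps j).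

Lemma zvec_ker p : kerE (zvec p).
Proof.
move=> e /(nthP 0) [i Hi <-].
rewrite /zvec linEBr linE_sumr linE_uvecn.
under eq_bigr => j _ do rewrite linEZr linE_uvecn G1 // eq_sym.
by rewrite (sum_delta (fun j => coef (nth 0 E j) p)) // subrr.
Qed.

Lemma reduce_vanish h : (forall x, kerE x -> linE h x = 0) -> reduce E ps h = 0.
Proof.
move=> Hh; apply: vec_coefP => k Hk.
rewrite -[coef 0 k]linE_uvecn linE0l.
case: (boolP (k \in ps)) => Hkp.
  by rewrite -(nth_index 0%N Hkp) coef_reduce_piv // -Hs index_mem.
have := linE_reduce_ker h (zvec_ker k); rewrite (Hh _ (zvec_ker k)).
rewrite /zvec linEBr linE_sumr linE_uvecn big1 ?subr0 // => j _.
by rewrite linEZr linE_uvecn coef_reduce_piv ?mulr0.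
Qed.

Lemma pivot_char p : (p \in ps) <-> ((p < n)%N /\ ~ exists z, kerE z /\ coef z p = 1 /\
   forall m, (p < m)%N -> coef z m = 0).
Proof.
split.
  move=> Hp; have Hi : (index p ps < size E)%N by rewrite -Hs index_mem.
  set i := index p ps in Hi.
  have Hpi : nth 0%N ps i = p by rewrite nth_index.
  have Hpn : (p < n)%N by rewrite -Hpi ps_lt.
  split=> // -[z [Hz [Hz1 Hz0]]].
  have := Hz _ (mem_nth 0 Hi).
  suff -> : linE (nth 0 E i) z = coef z p by rewrite Hz1; apply/eqP; exact: oner_neq0.
  rewrite -linE_uvecn linE_sym /linE; apply: eq_bigr => l _; rewrite [uvecn _ _ _]mxE.
  case: (ltngtP (val l) p) => Hl.
  - by rewrite H0 ?Hpi // !mulr0.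
  - have := Hz0 _ Hl; rewrite (coefE _ (ltn_ord l)).
    have -> : Ordinal (ltn_ord l) = l by apply: val_inj.
    by move=> ->; rewrite !mul0r.
  - by rewrite (H1 (j := i)) ?eqxx // Hpi Hl.
move=> [Hpn Hno]; apply/negPn/negP => Hp; apply: Hno; exists (zvec p).
split; first exact: zvec_ker.
split.
  rewrite /zvec coefB coef_sum coef_uvecn eqxx Hpn big1 ?subr0 // => j _.
  rewrite coefZ coef_uvecn.
  suff -> : (nth 0%N ps j == p) = false by rewrite mulr0.
  apply/negbTE; apply: contra Hp => /eqP <-; apply: mem_nth.
  by rewrite Hs.
move=> m Hm; rewrite /zvec coefB coef_sum coef_uvecn.
rewrite (_ : (p == m) = false); last by apply/negbTE; rewrite neq_ltn Hm.
rewrite big1 ?subr0 // => j _; rewrite coefZ coef_uvecn.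
case: eqP => [Ej|]; last by rewrite mulr0.
rewrite (coefE _ Hpn) H0 ?mul0r //=.
by rewrite Ej.
Qed.

End GJ.
Section Conv.
Variables (R : realFieldType) (n : nat).
Notation vec := 'rV[R]_n.

Lemma small_aux (L : seq vec) (w v : vec) :
  (forall s, s \in L -> 0 <= linE s w /\ (linE s w = 0 -> 0 <= linE s v)) ->
  exists e : R, 0 < e /\ forall d, 0 < d -> d <= e ->
     forall s, s \in L -> 0 <= linE s w + d * linE s v.
Proof.
elim: L => [|s L IH] H.
  by exists 1; split => // d _ _ s; rewrite in_nil.
have [e [He He']] : exists e : R, 0 < e /\ forall d, 0 < d -> d <= e ->
     forall s, s \in L -> 0 <= linE s w + d * linE s v.
  by apply: IH => t Ht; apply: H; rewrite inE Ht orbT.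
have [Ha Hb] := H s (mem_head _ _).
set a := linE s w in Ha Hb *; set b := linE s v in Hb *.
have [e1 [He1 He1']] : exists e1 : R, 0 < e1 /\ forall d, 0 < d -> d <= e1 -> 0 <= a + d * b.
  case: (lerP 0 b) => Hb0.
    by exists 1; split => // d Hd _; apply: addr_ge0 => //; apply: mulr_ge0 => //; apply: ltW.
  have Ha0 : 0 < a.
    rewrite lt_def Ha andbT; apply/eqP => Ha0; have := Hb Ha0; rewrite leNgt Hb0 //.
  exists (a / (- b)); split; first by apply: divr_gt0 => //; rewrite oppr_gt0.
  move=> d Hd; rewrite ler_pdivlMr ?oppr_gt0 // => Hdb; lra.
exists (Num.min e e1); split; first by rewrite lt_min He He1.
move=> d Hd; rewrite le_min => /andP [Hde Hde1] t; rewrite inE => /orP [/eqP ->|Ht].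
  exact: He1'.
exact: He'.
Qed.

Lemma small (L : seq vec) (w v : vec) :
  (forall s, s \in L -> 0 <= linE s w /\ (linE s w = 0 -> 0 <= linE s v)) ->
  exists e : R, 0 < e /\ forall s, s \in L -> 0 <= linE s (w + e *: v).
Proof.
move=> /small_aux [e [He H]]; exists e; split => // s Hs.
by rewrite linEDr linEZr; apply: H.
Qed.

Lemma solP_add (S : seq vec) (x y : vec) : Defs.solP (memS S) x -> Defs.solP (memS S) y -> Defs.solP (memS S) (x + y).
Proof. by move=> Hx Hy g Hg; rewrite linEDr addr_ge0 //; [apply: Hx|apply: Hy]. Qed.

Lemma solP0 (S : seq vec) : Defs.solP (memS S) (0 : vec).
Proof. by move=> g _; rewrite linE0r. Qed.

Lemma interior (S : seq vec) : exists x0, Defs.solP (memS S) x0 /\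
  forall f, f \in S -> ~ implied_eq S f -> 0 < linE f x0.
Proof.
suff : forall L : seq vec, exists x0, Defs.solP (memS S) x0 /\
  forall f, f \in L -> f \in S -> ~ implied_eq S f -> 0 < linE f x0.
  by move=> /(_ S) [x0 [H1 H2]]; exists x0; split => // f Hf; apply: H2.
elim => [|f L [x [Hx Hx']]].
  by exists 0; split; [apply: solP0|move=> f; rewrite in_nil].
case: (classic (f \in S /\ ~ implied_eq S f)) => [[HfS Hf]|Hf]; last first.
  exists x; split => // g; rewrite inE => /orP [/eqP -> HS Hi|]; last exact: Hx'.
  by exfalso; apply: Hf.
have [y [Hy Hfy]] : exists y, Defs.solP (memS S) y /\ linE f y != 0.
  apply: NNPP => Hn; apply: Hf => z Hz; apply/eqP; apply: negbNE; apply/negP => Hz0.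
  by apply: Hn; exists z.
have Hfy' : 0 < linE f y by rewrite lt_def Hfy; apply: Hy.
exists (x + y); split; first exact: solP_add.
move=> g; rewrite inE linEDr => /orP [/eqP -> _ _|Hg HgS Hgi].
  by apply: ltr_wpDl => //; apply: Hx.
by apply: ltr_pwDl; [apply: Hx'|apply: Hy].
Qed.

Definition kerImpl (S : seq vec) (x : vec) :=
  forall f, f \in S -> implied_eq S f -> linE f x = 0.

Lemma ker_incl (Sf Sg : seq vec) : equiv_ineq (memS Sf) (memS Sg) ->
  forall x, kerImpl Sf x -> kerImpl Sg x.
Proof.
move=> Heq x Hx.
have [x0 [Hx0 Hx0']] := interior Sf.
have [e [He He']] : exists e : R, 0 < e /\ forall s, s \in Sf -> 0 <= linE s (x0 + e *: x).
  apply: small => s Hs; split; first exact: Hx0.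
  case: (classic (implied_eq Sf s)) => Hi.
    by rewrite (Hx s Hs Hi).
  by move=> H0; have := Hx0' s Hs Hi; rewrite H0 ltxx.
have Hsol : Defs.solP (memS Sg) (x0 + e *: x) by apply/Heq.
have Hsol0 : Defs.solP (memS Sg) x0 by apply/Heq.
move=> g Hg Hgi.
have := Hgi _ Hsol; rewrite linEDr linEZr (Hgi _ Hsol0) add0r => /eqP.
by rewrite mulf_eq0 gt_eqF //= => /eqP.
Qed.

End Conv.
Section Uniq.
Variables (R : realFieldType) (n : nat).
Notation vec := 'rV[R]_n.

Lemma coef0 k : coef (0 : vec) k = 0.
Proof. by rewrite -linE_uvecn linE0l. Qed.

Lemma prop_lemma (t t' : vec) : t != 0 -> t' != 0 ->
  (forall v, 0 <= linE t v -> 0 <= linE t' v) -> triv_eq t t'.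
Proof.
move=> Ht Ht' H.
have Hker v : linE t v = 0 -> linE t' v = 0.
  move=> Hv; have H1 := H v; have H2 := H (- v).
  rewrite !linENr Hv oppr0 lexx in H1 H2.
  have := H1 isT; have := H2 isT; lra.
have [k [Hk Hak]] : exists k, (k < n)%N /\ coef t k != 0.
  apply: NNPP => Hn; move/eqP: Ht; apply; apply: vec_coefP => k Hk.
  rewrite coef0; apply/eqP; apply: negbNE; apply/negP => Hc; apply: Hn; by exists k.
set a := coef t k in Hak; set b := coef t' k.
have Hd : t' = (b / a) *: t.
  apply: vec_coefP => l Hl; rewrite coefZ.
  have := Hker (a *: uvecn l - coef t l *: uvecn k).
  rewrite !linEBr !linEZr !linE_uvecn -/a -/b mulrC subrr => /(_ erefl) /eqP.
  rewrite subr_eq0 => /eqP E1.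
  by apply: (mulfI Hak); rewrite E1 mulrA mulrCA divff // mulr1 mulrC.
have Hd0 : b / a != 0.
  by apply/eqP => H0; move/eqP: Ht'; apply; move: Hd; rewrite H0 scale0r.
have Htt := linE_self_gt0 Ht.
have := H t (ltW Htt); rewrite Hd linEZl => Hpos.
have Hdp : 0 < b / a.
  rewrite lt_def Hd0 /=.
  by rewrite pmulr_lge0 in Hpos.
exists (b / a)^-1; split; first by rewrite invr_gt0.
by rewrite scalerA mulVf // scale1r.
Qed.

Lemma uniq_char (T T' : seq vec) :
  (forall x, Defs.solP (memS T) x <-> Defs.solP (memS T') x) ->
  (forall t, t \in T -> t != 0) -> (forall t, t \in T' -> t != 0) ->
  (forall t, t \in T -> ~ redundant T t) ->
  (exists x0, forall t, t \in T -> 0 < linE t x0) ->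
  forall t, t \in T -> exists2 t', t' \in T' & triv_eq t t'.
Proof.
move=> Heq HT HT' Hred [x0 Hx0] t Ht.
set F := [seq g <- T | g != t].
have [x1 [Hx1 Htx1]] : exists x1, Defs.solP (memS F) x1 /\ linE t x1 < 0.
  apply: NNPP => Hn; apply: (Hred t Ht) => x Hx.
  rewrite leNgt; apply/negP => Hlt; apply: Hn; by exists x.
have Htx0 := Hx0 t Ht.
set w := (- linE t x1) *: x0 + linE t x0 *: x1.
have Htw : linE t w = 0.
  by rewrite /w linEDr !linEZr mulNr mulrC addNr.
have HFw : forall s, s \in F -> 0 < linE s w.
  move=> s; rewrite mem_filter => /andP [Hst HsT].
  have Hs1 : 0 <= linE s x1 by apply: Hx1; rewrite /memS mem_filter Hst.
  rewrite /w linEDr !linEZr.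
  apply: ltr_wpDr; first by apply: mulr_ge0 => //; apply: ltW.
  by apply: mulr_gt0; [rewrite oppr_gt0|apply: Hx0].
have HwT : Defs.solP (memS T) w.
  move=> s Hs; case: (eqVneq s t) => [->|Hst]; first by rewrite Htw.
  by apply: ltW; apply: HFw; rewrite mem_filter Hst.
have [t' Ht' Ht'w] : exists2 t', t' \in T' & linE t' w = 0.
  apply: NNPP => Hn.
  have HT'w : forall s, s \in T' -> 0 < linE s w.
    move=> s Hs; rewrite lt_def; apply/andP; split; last exact: (Heq w).1 HwT s Hs.
    by apply/eqP => H0; apply: Hn; exists s.
  have [e [He He']] : exists e : R, 0 < e /\ forall s, s \in T' -> 0 <= linE s (w + e *: - t).
    apply: small => s Hs; have Hp := HT'w s Hs; split; first exact: ltW.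
    by move=> H0; move: Hp; rewrite H0 ltxx.
  have : Defs.solP (memS T) (w + e *: - t) by apply/(Heq _).
  move=> /(_ t Ht); rewrite linEDr linEZr linENr Htw add0r.
  have := linE_self_gt0 (HT t Ht); nra.
exists t' => //; apply: prop_lemma; [exact: HT|exact: HT'|].
move=> v Hv.
have [e [He He']] : exists e : R, 0 < e /\ forall s, s \in F -> 0 <= linE s (w + e *: v).
  apply: small => s Hs; have Hp := HFw s Hs; split; first exact: ltW.
  by move=> H0; move: Hp; rewrite H0 ltxx.
have : Defs.solP (memS T') (w + e *: v).
  apply/(Heq _) => s Hs; case: (eqVneq s t) => [->|Hst].
    by rewrite linEDr linEZr Htw add0r mulr_ge0 // ltW.
  by apply: He'; rewrite mem_filter Hst.
move=> /(_ t' Ht'); rewrite linEDr linEZr Ht'w add0r.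
by rewrite pmulr_rge0.
Qed.

End Uniq.

Lemma count_le (T : eqType) (r : T -> T -> Prop) (s1 s2 : seq T) :
  uniq s1 -> uniq s2 -> (forall x, x \in s1 -> exists2 y, y \in s2 & r x y) ->
  (forall x1 x2 y, x1 \in s1 -> x2 \in s1 -> r x1 y -> r x2 y -> x1 = x2) ->
  (size s1 <= size s2)%N.
Proof.
elim: s1 s2 => [//|x s1 IH] s2 /= /andP [Hx Hu1] Hu2 H Hinj.
have [y Hy Hxy] := H x (mem_head _ _).
have : (size s1 <= size (rem y s2))%N.
  apply: IH => //; first exact: rem_uniq.
    move=> x' Hx'; have Hx'' : x' \in x :: s1 by rewrite inE Hx' orbT.
    have [y' Hy' Hr] := H x' Hx''.
    exists y' => //; rewrite (mem_rem_uniq _ Hu2) inE /= Hy' andbT.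
    apply/eqP => Ey; move: Hr; rewrite Ey => Hr.
    have Exx := Hinj _ _ _ (mem_head _ _) Hx'' Hxy Hr.
    by move: Hx; rewrite Exx Hx'.
  by move=> x1 x2 z H1 H2; apply: Hinj; rewrite inE ?H1 ?H2 orbT.
rewrite size_rem // => Hle.
have Hpos : (0 < size s2)%N by case: (s2) Hy.
by rewrite -(prednK Hpos) ltnS.
Qed.
Section Key.
Variables (R : realFieldType) (n : nat).
Notation vec := 'rV[R]_n.
Variables (E : seq vec) (ps : seq nat).
Hypotheses (Hs : size ps = size E)
  (Hall : all (fun p => p < n)%N ps)
  (H1 : forall (i j : nat) (l : 'I_n), (i < size E)%N -> (j < size E)%N ->
          val l = nth 0%N ps j -> (nth 0 E i) 0 l = (i == j)%:R).

Definition yv (x : vec) : vec :=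
  x - \sum_(j < size E) linE (nth 0 E j) x *: uvecn (nth 0%N ps j).

Lemma ker_y x : kerE E (yv x).
Proof.
move=> e /(nthP 0) [i Hi <-].
rewrite /yv linEBr linE_sumr.
under eq_bigr => j _ do rewrite linEZr linE_uvecn (G1 Hs Hall H1) // eq_sym.
by rewrite (sum_delta (fun j => linE (nth 0 E j) x)) // subrr.
Qed.

Lemma red_y f x : linE (reduce E ps f) x = linE f (yv x).
Proof.
rewrite -(linE_reduce_ker ps f (ker_y x)).
rewrite /yv linEBr linE_sumr big1 ?subr0 // => j _.
by rewrite linEZr linE_uvecn (coef_reduce_piv Hs Hall H1) ?mulr0.
Qed.

Lemma key (S : seq vec) :
  (forall x, kerE E x <-> kerImpl S x) ->
  forall x, Defs.solP (in_Rset S E ps) x <-> Defs.solP (memS S) (yv x).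
Proof.
move=> Hk x; split.
  move=> H f Hf.
  case: (classic (implied_eq S f)) => Hi.
    by rewrite ((Hk _).1 (ker_y x) f Hf Hi).
  case: (eqVneq (reduce E ps f) 0) => Hr.
    by rewrite -red_y Hr linE0l.
  rewrite -red_y; apply: H; split => //; exists f => //.
move=> H g [Hne [f Hf [Hi ->]]].
by rewrite red_y; apply: H.
Qed.

End Key.

Lemma sum_delta_v (R : realFieldType) n m (F : nat -> 'rV[R]_n) i : (i < m)%N ->
  \sum_(j < m) ((i == j)%:R) *: F j = F i.
Proof.
move=> Hi; rewrite (bigD1 (Ordinal Hi)) //= eqxx scale1r big1 ?addr0 // => j Hj.
suff -> : (i == val j) = false by rewrite scale0r.
by apply/negbTE; apply: contra Hj => /eqP Ei; apply/eqP/val_inj.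
Qed.

Lemma inj_lemma (R : realFieldType) n (T : seq 'rV[R]_n) :
  (forall t, t \in T -> ~ redundant T t) ->
  forall x1 x2 y, x1 \in T -> x2 \in T -> triv_eq x1 y -> triv_eq x2 y -> x1 = x2.
Proof.
move=> Hr x1 x2 y H1 H2 [c1 [Hc1 E1]] [c2 [Hc2 E2]].
case: (eqVneq x1 x2) => // Hne; exfalso; apply: (Hr x1 H1) => x Hx.
have : 0 <= linE x2 x by apply: Hx; rewrite /memS mem_filter eq_sym Hne.
rewrite E1 E2 !linEZl => Hp.
have Hy : 0 <= linE y x by rewrite pmulr_rge0 in Hp.
by apply: mulr_ge0 => //; apply: ltW.
Qed.

Unset Implicit Arguments.
Set Strict Implicit.

Theorem theorem7 (R : realFieldType) (n : nat) (Sf Sg : seq 'rV[R]_n) :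
  (forall f, f \in Sf -> f != 0) ->
  (forall g, g \in Sg -> g != 0) ->
  equiv_ineq (memS Sf) (memS Sg) ->
  forall (Ef Eg : seq 'rV[R]_n) (pf pg : seq nat),
  is_GJ Sf Ef pf -> is_GJ Sg Eg pg ->
  forall Sf' Sg' : seq 'rV[R]_n,
  min_char_set (in_Rset Sf Ef pf) Sf' ->
  min_char_set (in_Rset Sg Eg pg) Sg' ->
  Ef = Eg /\ triv_eq_sets Sf' Sg'.
Proof.
move=> Hf0 Hg0 Heq Ef Eg pf pg [[Hsf Hsortf Hallf] [H0f H1f Hkf]]
  [[Hsg Hsortg Hallg] [H0g H1g Hkg]] Sf' Sg' [Hu1 Hin1 Heq1 Hr1] [Hu2 Hin2 Heq2 Hr2].
have Heq' : equiv_ineq (memS Sg) (memS Sf) by move=> x; apply: iff_sym.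
have kE : forall x, kerE Ef x <-> kerE Eg x.
  move=> x; split => H.
    by apply/(Hkg x); apply: (ker_incl Heq); apply/(Hkf x).
  by apply/(Hkf x); apply: (ker_incl Heq'); apply/(Hkg x).
have Hp : pf = pg.
  apply: (irr_sorted_eq ltn_trans ltnn) => // p.
  apply/idP/idP => H.
    apply/(pivot_char Hsg Hallg H0g H1g).
    have [Hpn Hno] := (pivot_char Hsf Hallf H0f H1f p).1 H.
    split=> // -[z [Hz Hz']]; apply: Hno; exists z; split=> //; exact/kE.
  apply/(pivot_char Hsf Hallf H0f H1f).
  have [Hpn Hno] := (pivot_char Hsg Hallg H0g H1g p).1 H.
  split=> // -[z [Hz Hz']]; apply: Hno; exists z; split=> //; exact/kE.
subst pg.
have HE : Ef = Eg.
  apply: (@eq_from_nth _ 0); first by rewrite -Hsf -Hsg.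
  move=> i Hi; have Hig : (i < size Eg)%N by rewrite -Hsg Hsf.
  have := reduce_vanish Hsf Hallf H1f (h := nth 0 Eg i).
  move=> /(_ _) Hv.
  have {Hv} /eqP := Hv (fun x Hx => (kE x).1 Hx _ (mem_nth 0 Hig)).
  rewrite /reduce subr_eq0 => /eqP ->.
  under eq_bigr => j _ do rewrite (G1 Hsg Hallg H1g) // -?Hsg ?Hsf //.
  by rewrite (sum_delta_v (fun j => nth 0 Ef j)).
split=> //.
subst Eg.
set E := Ef; set ps := pf.
have KC : forall x, Defs.solP (memS Sf') x <-> Defs.solP (memS Sg') x.
  move=> x; rewrite (Heq1 x) (Heq2 x).
  rewrite (key Hsf Hallf H1f Hkf) (key Hsf Hallf H1f Hkg).
  exact: Heq.
have nz1 : forall t, t \in Sf' -> t != 0 by move=> t /Hin1 [].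
have nz2 : forall t, t \in Sg' -> t != 0 by move=> t /Hin2 [].
have int1 : exists x0, forall t, t \in Sf' -> 0 < linE t x0.
  have [x0 [Hx0 Hx0']] := interior Sf; exists x0 => t /Hin1 [_ [f Hf [Hi ->]]].
  rewrite (linE_reduce_ker pf f (x := x0)); first exact: Hx0'.
  by apply/(Hkf x0) => g Hg Hgi; apply: Hgi.
have int2 : exists x0, forall t, t \in Sg' -> 0 < linE t x0.
  have [x0 [Hx0 Hx0']] := interior Sg; exists x0 => t /Hin2 [_ [f Hf [Hi ->]]].
  rewrite (linE_reduce_ker pf f (x := x0)); first exact: Hx0'.
  by apply/(Hkg x0) => g Hg Hgi; apply: Hgi.
have KC' : forall x, Defs.solP (memS Sg') x <-> Defs.solP (memS Sf') x.
  by move=> x; apply: iff_sym.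
split.
- rewrite !undup_id //; apply/eqP; rewrite eqn_leq; apply/andP; split.
    apply: (count_le (r := @triv_eq R n)) => //.
      exact: uniq_char KC nz1 nz2 Hr1 int1.
    exact: inj_lemma.
  apply: (count_le (r := @triv_eq R n)) => //.
    exact: uniq_char KC' nz2 nz1 Hr2 int2.
  exact: inj_lemma.
- exact: uniq_char KC nz1 nz2 Hr1 int1.
- exact: uniq_char KC' nz2 nz1 Hr2 int2.
Qed.
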